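(* Let $M$ be a nonuniform matroid on a finite set $S$. Then $M$ is irreducible with respect to free product if and only if the lattice $\mathcal D(M)$ contains no nontrivial pinchpoint.
   Context: For a matroid $M$ on $S$ write $\rho_M$ for its rank function, $\rho(M)=\rho_M(S)$, $\nu_M(A)=|A|-\rho_M(A)$, $\lambda_M(A)=\rho(M)-\rho_M(A)$. For matroids $M$ on $S$ and $N$ on $T$ with $S\cap T=\emptyset$, the free product $M\mathbin{\Box} N$ is the matroid on $S\cup T$ whose independent sets are those $A$ with $A\cap S$ independent in $M$ and $\lambda_M(A\cap S)\geq\nu_N(A\cap T)$; it is associative. A nonempty matroid $M$ is irreducible if every factorization of $M$ as a free product of matroids contains $M$ itself as a factor. A cyclic flat is a flat that is a union of circuits. $\mathcal D(M)$ is the complete sublattice of the Boolean algebra $2^S$ generated by all cyclic flats of $M$ (closed under arbitrary unions and intersections, so it contains $\emptyset$ as the empty union and $S$ as the empty intersection). An element $x$ of a poset $P$ is a pinchpoint if every element of $P$ is comparable to $x$; it is nontrivial if it is neither minimal nor maximal in $P$. *)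

(* Defs.v *)
From mathcomp Require Import all_boot.
Set Implicit Arguments. Unset Strict Implicit. Unset Printing Implicit Defensive.

Section Matroids.
Variable U : finType.

(* A matroid is given by its ground set E and its family I of independent sets. *)
Definition mat := ({set U} * {set {set U}})%type.

Definition is_matroid (M : mat) : Prop :=
  [/\ forall A : {set U}, A \in M.2 -> A \subset M.1,
      set0 \in M.2,
      forall A B : {set U}, B \in M.2 -> A \subset B -> A \in M.2 &
      forall A B : {set U}, A \in M.2 -> B \in M.2 -> #|A| < #|B| ->
        exists2 x, x \in B :\: A & x |: A \in M.2].

Definition rk (M : mat) (A : {set U}) : nat :=
  \max_(B in M.2 | B \subset A) #|B|.

Definition rkM (M : mat) : nat := rk M M.1.
Definition nullity (M : mat) (A : {set U}) : nat := #|A| - rk M A.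
Definition lambda (M : mat) (A : {set U}) : nat := rkM M - rk M A.

(* Free product M [] N (for disjoint ground sets) *)
Definition free_product (M N : mat) : mat :=
  (M.1 :|: N.1,
   [set A : {set U} | [&& A \subset M.1 :|: N.1, A :&: M.1 \in M.2 &
                         nullity N (A :&: N.1) <= lambda M (A :&: M.1)]]).

Definition empty_mat : mat := (set0, [set set0]).

Fixpoint free_product_seq (s : seq mat) : mat :=
  match s with
  | [::] => empty_mat
  | M :: s' => free_product M (free_product_seq s')
  end.

Fixpoint disjoint_grounds (s : seq mat) : Prop :=
  match s with
  | [::] => True
  | M :: s' => [disjoint M.1 & (free_product_seq s').1] /\ disjoint_grounds s'
  end.

Definition irreducible (M : mat) : Prop :=
  M.1 != set0 /\
  forall s : seq mat, (forall N, N \in s -> is_matroid N) ->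
    disjoint_grounds s -> free_product_seq s = M -> M \in s.

Definition uniform (M : mat) : Prop :=
  exists r : nat, M.2 = [set A : {set U} | (A \subset M.1) && (#|A| <= r)].

Definition circuit (M : mat) (C : {set U}) : Prop :=
  [/\ C \subset M.1, C \notin M.2 & forall x, x \in C -> C :\ x \in M.2].

Definition flat (M : mat) (F : {set U}) : Prop :=
  F \subset M.1 /\ forall x, x \in M.1 :\: F -> rk M F < rk M (x |: F).

Definition cyclic (M : mat) (F : {set U}) : Prop :=
  forall x, x \in F -> exists C, [/\ circuit M C, x \in C & C \subset F].

Definition cyclic_flat (M : mat) (F : {set U}) : Prop := flat M F /\ cyclic M F.

(* complete sublattice of 2^E: closed under arbitrary unions and
   intersections (empty union = set0, empty intersection = E) *)
Definition complete_sublattice (E : {set U}) (Fam : {set {set U}}) : Prop :=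
  [/\ forall X, X \in Fam -> X \subset E,
      forall P : {set {set U}}, P \subset Fam -> \bigcup_(X in P) X \in Fam &
      forall P : {set {set U}}, P \subset Fam -> E :&: \bigcap_(X in P) X \in Fam].

(* D(M): the complete sublattice of 2^E generated by the cyclic flats *)
Definition inD (M : mat) (X : {set U}) : Prop :=
  forall Fam : {set {set U}}, complete_sublattice M.1 Fam ->
    (forall F, cyclic_flat M F -> F \in Fam) -> X \in Fam.

Definition nontrivial_pinchpoint (M : mat) (X : {set U}) : Prop :=
  [/\ inD M X,
      forall Y, inD M Y -> (Y \subset X) || (X \subset Y),
      exists2 Y, inD M Y & Y \proper X &
      exists2 Y, inD M Y & X \proper Y].

End Matroids.

(* Main.v *)
Require Import Defs.
From mathcomp Require Import all_boot.
From mathcomp Require Import zify.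
From Stdlib Require Import ClassicalEpsilon Classical.
Set Implicit Arguments. Unset Strict Implicit. Unset Printing Implicit Defensive.

Lemma arith2 a1 a2 r rx ra : a2 - r <= rx - a1 -> r + rx <= ra -> ra < a1 + a2 -> a1 <= rx -> False.
Proof. lia. Qed.
Lemma arith3 k kx R bx rx a1 a2 : kx <= R -> k = bx + kx -> a1 + a2 <= k -> bx = rx -> a1 <= rx -> a2 - R <= rx - a1.
Proof. lia. Qed.
Lemma arith4 b v q m c : b <= q -> v = m -> m <= c -> b + v - q <= c.
Proof. lia. Qed.

Lemma arith5 a zt r1 b rz a' zt' c1 b2' rs c2 : minn (a+zt) (r1+b) <= rz -> rz <= minn (a' + zt') c1 ->
  rs <= minn c2 (r1 + b2') -> rz < rs -> a' <= a -> zt = zt' + 1 -> b2' <= b -> False.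
Proof. lia. Qed.

Section Gen.
Variable U : finType.
Implicit Types (M N P Q : mat U) (A B C X Y Z : {set U}).

Lemma rk_ge M B Y : B \in M.2 -> B \subset Y -> #|B| <= rk M Y.
Proof. by move=> h1 h2; apply: (@leq_bigmax_cond _ (fun B => (B \in M.2) && (B \subset Y)) (fun B => #|B|)); rewrite h1 h2. Qed.

Lemma rk_le_card M Y : rk M Y <= #|Y|.
Proof. by apply/bigmax_leqP => B /andP[_ h]; apply: subset_leq_card. Qed.

Lemma rk_mono M Y1 Y2 : Y1 \subset Y2 -> rk M Y1 <= rk M Y2.
Proof.
move=> s; apply/bigmax_leqP => B /andP[h1 h2]; apply: rk_ge => //.
exact: subset_trans s.
Qed.

Lemma rk_indep M A : A \in M.2 -> rk M A = #|A|.
Proof. by move=> h; apply/eqP; rewrite eqn_leq rk_le_card rk_ge. Qed.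

Lemma rk_wit M Y : set0 \in M.2 ->
  exists B, [/\ B \in M.2, B \subset Y & #|B| = rk M Y].
Proof.
move=> h0.
have P0 : (set0 \in M.2) && (set0 \subset Y) by rewrite h0 sub0set.
case: (@arg_maxnP _ set0 (fun B => (B \in M.2) && (B \subset Y)) (fun B => #|B|) P0) => B /andP[h1 h2] hmax.
exists B; split => //; apply/eqP; rewrite eqn_leq rk_ge //=.
by apply/bigmax_leqP => C hC; apply: hmax.
Qed.

Lemma null0 P A : set0 \in P.2 -> (nullity P A == 0) = (A \in P.2).
Proof.
move=> h0; rewrite /nullity subn_eq0.
apply/idP/idP => [h|h]; last by rewrite rk_ge.
have [B [h1 h2 h3]] := rk_wit A h0.
have : B == A by rewrite eqEcard h2 h3.
by move/eqP <-.
Qed.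

Lemma card_split A S T : A \subset S :|: T -> [disjoint S & T] ->
  #|A| = #|A :&: S| + #|A :&: T|.
Proof.
move=> hA hd; rewrite -(cardsID S A); congr (_ + _); apply: eq_card => x.
rewrite !inE.
case hx: (x \in A) => //=; case hs: (x \in S) => //=.
  by apply/esym/negP => ht; move: hd; rewrite disjoint_subset => /subsetP /(_ x hs); rewrite inE ht.
by move/subsetP: hA => /(_ x hx); rewrite inE hs.
Qed.


Section Mat.
Variable M : mat U.
Hypothesis hM : is_matroid M.

Lemma m_sub A : A \in M.2 -> A \subset M.1. Proof. by case: hM => h _ _ _; apply: h. Qed.
Lemma m_0 : set0 \in M.2. Proof. by case: hM. Qed.
Lemma m_down A B : B \in M.2 -> A \subset B -> A \in M.2. Proof. by case: hM => _ _ h _; apply: h. Qed.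
Lemma m_aug A B : A \in M.2 -> B \in M.2 -> #|A| < #|B| ->
        exists2 x, x \in B :\: A & x |: A \in M.2.
Proof. by case: hM => _ _ _ h; apply: h. Qed.

Lemma m_extend J Y : J \in M.2 -> J \subset Y ->
  exists K, [/\ K \in M.2, J \subset K, K \subset Y & #|K| = rk M Y].
Proof.
move=> hJ hJY.
have P0 : (J \in M.2) && (J \subset J) && (J \subset Y) by rewrite hJ subxx hJY.
case: (@arg_maxnP _ J (fun K => (K \in M.2) && (J \subset K) && (K \subset Y)) (fun K => #|K|) P0)
  => K /andP[/andP[h1 h2] h3] hmax.
exists K; split => //; apply/eqP; rewrite eqn_leq rk_ge //=.
have [B [hB1 hB2 hB3]] := rk_wit Y m_0.
rewrite -hB3 leqNgt; apply/negP => hlt.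
have [x /setDP[xB xK] hx] := m_aug h1 hB1 hlt.
have : #|x |: K| <= #|K|.
  apply: hmax; rewrite hx /=; apply/andP; split.
    by apply: subset_trans h2 _; apply: subsetUr.
  by rewrite subUset sub1set (subsetP hB2) // h3.
by rewrite cardsU1 xK add1n ltnn.
Qed.

Lemma m_dep_rk A : A \notin M.2 -> rk M A < #|A|.
Proof.
move=> hA; rewrite ltn_neqAle rk_le_card andbT; apply/negP => /eqP h.
by move: hA; rewrite -null0 ?m_0 // /nullity h subnn.
Qed.

Lemma m_circuit (D : {set U}) : D \subset M.1 -> D \notin M.2 ->
  exists C, circuit M C /\ C \subset D.
Proof.
move=> hD hnD.
have P0 : (D \subset D) && (D \notin M.2) by rewrite subxx hnD.
case: (@arg_minnP _ D (fun C => (C \subset D) && (C \notin M.2)) (fun C => #|C|) P0)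
  => C /andP[h1 h2] hmin.
exists C; split => //; split => //; first exact: subset_trans h1 hD.
move=> x hx; apply/negPn/negP => hn.
have : #|C| <= #|C :\ x| by apply: hmin; rewrite hn andbT; apply: subset_trans h1; apply: subsetDl.
by rewrite (cardsD1 x C) hx add1n ltnn.
Qed.

Definition clo C := [set x in M.1 | rk M (x |: C) == rk M C].

Lemma clo_rk C A X : C \subset A -> X \subset clo C -> rk M (A :|: X) = rk M A.
Proof.
move=> hCA hX; apply/eqP; rewrite eqn_leq [X in _ && X]rk_mono ?subsetUl // andbT.
have [BC [hBC1 hBC2 hBC3]] := rk_wit C m_0.
have [J [hJ1 hJ2 hJ3 hJ4]] := m_extend hBC1 (subset_trans hBC2 hCA).
have [B [hB1 hB2 hB3]] := rk_wit (A :|: X) m_0.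
rewrite -hB3 -hJ4 leqNgt; apply/negP => hlt.
have [x /setDP[xB xJ] hx] := m_aug hJ1 hB1 hlt.
have := subsetP hB2 x xB; rewrite inE => /orP[xA|xX].
  have : #|x |: J| <= rk M A by apply: rk_ge; rewrite // subUset sub1set xA hJ3.
  by rewrite cardsU1 xJ add1n hJ4 ltnn.
have := subsetP hX x xX; rewrite inE => /andP[_ /eqP hr].
have xBC : x \notin BC by apply: contra xJ; apply: (subsetP hJ2).
have : #|x |: BC| <= rk M (x |: C).
  apply: rk_ge; first by apply: m_down hx _; apply: setUS.
  by apply: setUS.
by rewrite cardsU1 xBC add1n hr -hBC3 ltnn.
Qed.

Lemma clo_sub C : C \subset M.1 -> C \subset clo C.
Proof.
move=> hC; apply/subsetP => x xC; rewrite inE (subsetP hC) //=.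
by rewrite (setUidPr _) // sub1set.
Qed.

Lemma clo_cf C : circuit M C -> cyclic_flat M (clo C).
Proof.
move=> hcirc; have [hCE hCn hCd] := hcirc.
have hsub := clo_sub hCE.
have rclo : rk M (clo C) = rk M C.
  by rewrite -(clo_rk (subxx C) (subxx (clo C))) (setUidPr hsub).
split; first split.
- by apply/subsetP => x; rewrite inE => /andP[].
- move=> x /setDP[xE xn]; rewrite rclo.
  apply: (@leq_trans (rk M (x |: C))); last by apply: rk_mono; apply: setUS.
  rewrite ltn_neqAle rk_mono ?subsetUr // andbT eq_sym.
  by apply: contra xn => h; rewrite inE xE.
- move=> x hx.
  case xC: (x \in C); first by exists C; split.
  have [BC [hBC1 hBC2 hBC3]] := rk_wit C m_0.
  have xE : x \in M.1 by move: hx; rewrite inE => /andP[].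
  have hdep : x |: BC \notin M.2.
    apply/negP => hin.
    have : #|x |: BC| <= rk M (x |: C) by apply: rk_ge => //; apply: setUS.
    move: hx; rewrite inE => /andP[_ /eqP ->].
    by rewrite cardsU1 (negbTE (contraFN (subsetP hBC2 x) xC)) hBC3 ltnn.
  have hxBE : x |: BC \subset M.1 by rewrite subUset sub1set xE (subset_trans hBC2 hCE).
  have [C' [hC' hC'sub]] := m_circuit hxBE hdep.
  exists C'; split => //.
    apply/negPn/negP => hxC'.
    have : C' \subset BC.
      apply/subsetP => y hy; have := subsetP hC'sub y hy; rewrite !inE => /orP[/eqP hyx|//].
      by move: hy; rewrite hyx => hy; rewrite hy in hxC'.
    by move/(m_down hBC1); case: hC' => _ /negP.
  apply: (subset_trans hC'sub); rewrite subUset sub1set hx.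
  exact: subset_trans hBC2 hsub.
Qed.

Lemma circuit_rm C Z t : circuit M C -> t \in C -> C \subset Z -> rk M (Z :\ t) = rk M Z.
Proof.
move=> [hCE hCn hCd] tC hCZ.
have htZ : t \in Z by apply: (subsetP hCZ).
have h1 : [set t] \subset clo (C :\ t).
  rewrite sub1set inE (subsetP hCE) //= setD1K //.
  rewrite eqn_leq [X in _ && X]rk_mono ?subsetDl // andbT.
  have := m_dep_rk hCn; rewrite (rk_indep (hCd t tC)) (cardsD1 t C) tC add1n ltnS //.
have := clo_rk (setSD [set t] hCZ) h1.
by rewrite setUC setD1K // => ->.
Qed.

End Mat.

Lemma fp_empty_ground N P : P.1 = set0 -> (forall A, A \in N.2 -> A \subset N.1) ->
  free_product N P = N.
Proof.
move=> hP hN; case: N hN => E I /= hN; rewrite /free_product /= hP setU0.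
congr pair; apply/setP => A; rewrite inE setI0.
have -> : nullity P set0 = 0 by rewrite /nullity cards0.
case hAE: (A \subset E) => /=; last by apply/esym/negP => /hN; rewrite hAE.
by rewrite (setIidPl hAE) andbT.
Qed.

Lemma fp_empty_l P : set0 \in P.2 -> (forall A, A \in P.2 -> A \subset P.1) ->
  free_product (empty_mat U) P = P.
Proof.
move=> h0 hP; case: P h0 hP => E I /= h0 hP; rewrite /free_product /= set0U.
congr pair; apply/setP => A; rewrite inE setI0 inE eqxx /=.
have -> : lambda (empty_mat U) set0 = 0 by rewrite /lambda subnn.
rewrite leqn0.
case hAE: (A \subset E) => /=; last by apply/esym/negP => /hP; rewrite hAE.
by rewrite (setIidPl hAE) (@null0 (E, I) A h0).
Qed.

Lemma fps_sub s A : A \in (free_product_seq s).2 -> A \subset (free_product_seq s).1.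
Proof.
case: s => [|N s] /=; first by rewrite inE => /eqP ->.
by rewrite inE => /andP[].
Qed.

Lemma fps_0 s : (forall N, N \in s -> is_matroid N) -> set0 \in (free_product_seq s).2.
Proof.
case: s => [|N s] hs /=; first by rewrite inE.
have hN : is_matroid N by apply: hs; rewrite inE eqxx.
rewrite inE sub0set set0I (m_0 hN) /=.
by rewrite set0I /nullity cards0.
Qed.

Lemma reduce s : (forall N, N \in s -> is_matroid N) -> disjoint_grounds s ->
  (free_product_seq s).1 != set0 -> free_product_seq s \notin s ->
  exists N1 Q, [/\ is_matroid N1, (N1.1 != set0) && (Q.1 != set0),
     [disjoint N1.1 & Q.1], set0 \in Q.2 & free_product N1 Q = free_product_seq s].
Proof.
elim: s => [|N s IH] hs /=; first by rewrite eqxx.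
move=> [hd hds] hne hnin.
have hN : is_matroid N by apply: hs; rewrite inE eqxx.
have hs' : forall N', N' \in s -> is_matroid N' by move=> N' h; apply: hs; rewrite inE h orbT.
case: (eqVneq N.1 set0) => hN1.
  have eN : N = empty_mat U.
    case: N hN hN1 {hs hd hne hnin} => E I hN /= hE; subst E; congr pair.
    apply/setP => A; rewrite inE; apply/idP/idP => [hA|/eqP ->]; last exact: (m_0 hN).
    by have := m_sub hN hA; rewrite subset0.
  have e1 : free_product (empty_mat U) (free_product_seq s) = free_product_seq s.
    by apply: fp_empty_l; [apply: fps_0 | apply: fps_sub].
  move: hne hnin; rewrite eN e1 /= set0U => hne hnin.
  apply: IH => //.
  by apply/negP => h; move/negP: hnin; apply; rewrite inE h orbT.
case: (eqVneq (free_product_seq s).1 set0) => hP.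
  move: hnin; rewrite fp_empty_ground //; last exact: m_sub hN.
  by rewrite inE eqxx.
by exists N, (free_product_seq s); split => //; [rewrite hN1 hP | apply: fps_0].
Qed.

Definition restr M X : mat U := (X, [set A : {set U} in M.2 | A \subset X]).
Definition bX M X := [arg max_(B > set0 | (B \in M.2) && (B \subset X)) #|B|].
Definition contr M X : mat U :=
  (M.1 :\: X, [set A : {set U} | (A \subset M.1 :\: X) && (A :|: bX M X \in M.2)]).

Section RC.
Variable M : mat U.
Hypothesis hM : is_matroid M.
Variable X : {set U}.
Hypothesis hX : X \subset M.1.

Lemma bX_spec : [/\ bX M X \in M.2, bX M X \subset X & #|bX M X| = rk M X].
Proof.
have P0 : (set0 \in M.2) && (set0 \subset X) by rewrite (m_0 hM) sub0set.
rewrite /bX; case: (@arg_maxnP _ set0 (fun B => (B \in M.2) && (B \subset X)) (fun B => #|B|) P0)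
  => B /andP[h1 h2] hmax.
split => //; apply/eqP; rewrite eqn_leq rk_ge //=.
by apply/bigmax_leqP => C hC; apply: hmax.
Qed.

Lemma restr_matroid : is_matroid (restr M X).
Proof.
split => /=.
- by move=> A; rewrite inE => /andP[].
- by rewrite inE (m_0 hM) sub0set.
- move=> A B; rewrite !inE => /andP[hB hBX] hAB.
  by rewrite (m_down hM hB hAB) (subset_trans hAB hBX).
- move=> A B; rewrite !inE => /andP[hA hAX] /andP[hB hBX] hlt.
  have [x hx hxA] := m_aug hM hA hB hlt.
  exists x => //; rewrite inE hxA subUset hAX andbT sub1set.
  by move/setDP: hx => [xB _]; apply: (subsetP hBX).
Qed.

Lemma contr_matroid : is_matroid (contr M X).
Proof.
have [b1 b2 b3] := bX_spec.
have hdisj : forall A, A \subset M.1 :\: X -> #|A :|: bX M X| = #|A| + #|bX M X|.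
  move=> A hA; rewrite cardsU; suff -> : A :&: bX M X = set0 by rewrite cards0 subn0.
  apply/setP => x; rewrite !inE; apply/negP => /andP[xA xb].
  by have := subsetP hA x xA; rewrite inE (subsetP b2 x xb).
split => /=.
- by move=> A; rewrite inE => /andP[].
- by rewrite inE sub0set set0U b1.
- move=> A B; rewrite !inE => /andP[hB hBX] hAB.
  rewrite (subset_trans hAB hB) /=; apply: (m_down hM hBX).
  by apply: setSU.
- move=> A B; rewrite !inE => /andP[hA hAX] /andP[hB hBX] hlt.
  have hlt' : #|A :|: bX M X| < #|B :|: bX M X| by rewrite !hdisj // ltn_add2r.
  have [x hx hxA] := m_aug hM hAX hBX hlt'.
  move: hx; rewrite !inE negb_or => /andP[/andP[xnA xnb] /orP[xB|xb]]; last by rewrite xb in xnb.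
  exists x; first by rewrite inE xB xnA.
  by rewrite inE subUset sub1set (subsetP hB x xB) hA /= -setUA.
Qed.

Lemma rk_restr Y : Y \subset X -> rk (restr M X) Y = rk M Y.
Proof.
move=> hY; apply: eq_bigl => B /=; rewrite inE.
case hB: (B \in M.2) => //=; case hBY: (B \subset Y); rewrite ?andbF ?andbT //.
exact: subset_trans hBY hY.
Qed.

Hypothesis hcomp : forall Z, cyclic_flat M Z -> (Z \subset X) || (X \subset Z).

Lemma fp_restr_contr : free_product (restr M X) (contr M X) = M.
Proof.
have [b1 b2 b3] := bX_spec.
rewrite [in RHS](surjective_pairing M) /free_product /=; congr pair.
  by apply/setP => x; rewrite !inE; case hx: (x \in X) => //=; rewrite (subsetP hX).
apply/setP => A; rewrite inE.
have eUE : X :|: M.1 :\: X = M.1.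
  by apply/setP => x; rewrite !inE; case hx: (x \in X) => //=; rewrite (subsetP hX).
rewrite eUE /lambda /rkM /= rk_restr ?subxx // rk_restr ?subsetIr //.
set bb := bX M X in b1 b2 b3 *.
have contr0 : set0 \in (contr M X).2 by rewrite inE sub0set set0U.
case hAE: (A \subset M.1) => /=; last first.
  by apply/esym/negP => hA; move: hAE; rewrite (m_sub hM hA).
have eAD : A :&: (M.1 :\: X) = A :\: X.
  apply/setP => x; rewrite !inE; case hx: (x \in A); rewrite ?andbF ?andbT //=.
  by rewrite (subsetP hAE x hx) andbT.
rewrite eAD inE subsetIr andbT.
have hcard : #|A| = #|A :&: X| + #|A :\: X| by rewrite cardsID.
apply/idP/idP.
- move=> /andP[hAX hnull].
  apply/negPn/negP => hnA.
  have [C [hC hCA]] := m_circuit hAE hnA.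
  have hXC : X \subset clo M C.
    have := hcomp (clo_cf hM hC); case/orP => // hcl.
    have hCX : C \subset A :&: X.
      have hCE : C \subset M.1 by case: hC.
      by rewrite subsetI hCA (subset_trans (clo_sub hCE) hcl).
    case: hC => _ /negP hn _; exfalso; apply: hn.
exact: (m_down hM hAX hCX).
  have [A' [hA'1 hA'2 hA'3]] := rk_wit (A :\: X) contr0.
  move: hA'1; rewrite inE => /andP[hA'E hA'b].
  have hr : rk M (A :|: X) = rk M A := clo_rk hM hCA hXC.
  have h1 : #|A' :|: bb| <= rk M (A :|: X).
    apply: rk_ge => //; apply: setUSS => //; exact: subset_trans hA'2 (subsetDl _ _).
  have h2 : #|A' :|: bb| = #|A'| + #|bb|.
    rewrite cardsU; suff -> : A' :&: bb = set0 by rewrite cards0 subn0.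
    apply/setP => x; rewrite !inE; apply/negP => /andP[xA xb].
    by have := subsetP hA'E x xA; rewrite inE (subsetP b2 x xb).
  have h3 := m_dep_rk hM hnA.
  have h4 : #|A :&: X| <= rk M X by apply: rk_ge => //; apply: subsetIr.
  move: hnull; rewrite /nullity -hA'3 (rk_indep hAX) => hnull.
  rewrite hcard in h3; rewrite hr h2 b3 in h1.
  exact: (arith2 hnull h1 h3 h4).
- move=> hA.
  have hAX : A :&: X \in M.2 by exact: (m_down hM hA (subsetIl _ _)).
  rewrite hAX /=.
  have [K [hK1 hK2 hK3 hK4]] := m_extend hM b1 (subsetUr A bb).
  have hKX : K :&: X = bb.
    apply/eqP; rewrite eq_sym eqEcard subsetI hK2 b2 /= b3.
    by apply: rk_ge; [exact: (m_down hM hK1 (subsetIl _ _)) | apply: subsetIr].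
  have hA' : K :\: X \in (contr M X).2.
    rewrite inE; apply/andP; split.
      apply: setSD; apply: subset_trans hK3 _; by rewrite subUset hAE (subset_trans b2 hX).
    suff -> : K :\: X :|: bb = K by [].
    by rewrite -hKX setUC setID.
  have hA'sub : K :\: X \subset A :\: X.
    apply/subsetP => x; rewrite !inE => /andP[xX xK].
    have := subsetP hK3 x xK; rewrite inE => /orP[xA|xb].
      by rewrite xX xA.
    by rewrite (subsetP b2 x xb) in xX.
  have h1 := rk_ge hA' hA'sub.
  have h2 : #|K| = #|K :&: X| + #|K :\: X| by rewrite cardsID.
  have h3 : #|A| <= rk M (A :|: bb) by apply: rk_ge => //; apply: subsetUl.
  have h4 : #|A :&: X| <= rk M X by apply: rk_ge => //; apply: subsetIr.
  rewrite /nullity (rk_indep hAX) hKX in h2 *.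
  rewrite hcard -hK4 in h3.
  exact: (arith3 h1 h2 h3 b3 h4).
Qed.

End RC.

Lemma nonunif_cf M : is_matroid M -> ~ uniform M ->
  exists Z, [/\ cyclic_flat M Z, Z != set0 & Z != M.1].
Proof.
move=> hM hnu; apply: NNPP => hno; apply: hnu.
exists (rk M M.1); apply/setP => A; rewrite inE.
apply/idP/idP => [hA|/andP[hAE hAr]].
  by rewrite (m_sub hM hA) rk_ge // (m_sub hM hA).
apply/negPn/negP => hnA.
have [C [hC hCA]] := m_circuit hAE hnA.
have hCE : C \subset M.1 by case: hC.
have hcf := clo_cf hM hC.
case: (eqVneq (clo M C) set0) => h0.
  have : C \subset set0 by rewrite -h0 clo_sub.
  rewrite subset0 => /eqP hC0; case: hC => _ /negP; rewrite hC0 (m_0 hM); by [].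
case: (eqVneq (clo M C) M.1) => h1; last by apply: hno; exists (clo M C); split.
have hsub : M.1 \subset clo M C by rewrite h1.
have hr := clo_rk hM (subxx C) hsub.
rewrite (setUidPr hCE) in hr.
have hCn : C \notin M.2 by case: hC.
have := m_dep_rk hM hCn.
rewrite -hr => hlt.
have := subset_leq_card hCA; lia.
Qed.

Section FP.
Variables (N1 Q : mat U).
Hypothesis hN1 : is_matroid N1.
Hypothesis hQ0 : set0 \in Q.2.
Hypothesis hd : [disjoint N1.1 & Q.1].
Local Notation S := (N1.1).
Local Notation T := (Q.1).
Local Notation FP := (free_product N1 Q).

Lemma arith1 a b c d x : b <= c -> a <= d -> a + (b + minn (c - b) (d - a)) <= x -> minn (a + c) (d + b) <= x.
Proof. lia. Qed.

Lemma fp_ub Y : rk FP Y <= minn (rk N1 (Y :&: S) + #|Y :&: T|) (rkM N1 + rk Q (Y :&: T)).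
Proof.
apply/bigmax_leqP => A /andP[hA hAY].
move: hA; rewrite inE => /and3P[hAST hAS hnull].
have hc := card_split hAST hd.
have h1 : #|A :&: S| <= rk N1 (Y :&: S) by apply: rk_ge => //; apply: setSI.
have h2 : #|A :&: T| <= #|Y :&: T| by apply: subset_leq_card; apply: setSI.
have h3 : rk Q (A :&: T) <= rk Q (Y :&: T) by apply: rk_mono; apply: setSI.
have h4 : rk Q (A :&: T) <= #|A :&: T| by apply: rk_le_card.
have h5 : #|A :&: S| <= rkM N1 by apply: rk_ge => //; apply: subsetIr.
move: hnull; rewrite /nullity /lambda (rk_indep hAS) => hn.
rewrite hc leq_min; apply/andP; split; lia.
Qed.

Lemma exists_sub (W : {set U}) k : k <= #|W| -> exists V : {set U}, V \subset W /\ #|V| = k.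
Proof.
move=> hk; exists [set x in take k (enum W)]; split.
  by apply/subsetP => x; rewrite inE => /mem_take; rewrite mem_enum.
rewrite cardsE; have /card_uniqP -> := take_uniq k (enum_uniq (mem W)).
rewrite size_take -cardE; case: ifP => // /negbT; rewrite -leqNgt => h.
by apply/eqP; rewrite eqn_leq h hk.
Qed.

Lemma fp_lb Y : Y \subset S :|: T ->
  minn (rk N1 (Y :&: S) + #|Y :&: T|) (rkM N1 + rk Q (Y :&: T)) <= rk FP Y.
Proof.
move=> hY.
have [AS [hAS1 hAS2 hAS3]] := rk_wit (Y :&: S) (m_0 hN1).
have [B2 [hB1 hB2 hB3]] := rk_wit (Y :&: T) hQ0.
set m := minn (#|Y :&: T| - #|B2|) (rkM N1 - #|AS|).
have [V [hV1 hV2]] : exists V : {set U}, V \subset (Y :&: T) :\: B2 /\ #|V| = m.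
  apply: exists_sub; rewrite /m cardsD (setIidPr hB2); lia.
have hB2V : #|B2 :|: V| = #|B2| + #|V|.
  rewrite cardsU; suff -> : B2 :&: V = set0 by rewrite cards0 subn0.
  apply/setP => x; rewrite !inE; apply/negP => /andP[xB xV].
  by have := subsetP hV1 x xV; rewrite inE xB.
have hVT : B2 :|: V \subset Y :&: T by rewrite subUset hB2 (subset_trans hV1 (subsetDl _ _)).
have hASS : AS \subset S := subset_trans hAS2 (subsetIr _ _).
have hAT : (AS :|: (B2 :|: V)) :&: T = B2 :|: V.
  apply/setP => x; rewrite [in LHS]inE [x \in AS :|: _]inE.
  case hx: (x \in AS) => /=.
    have xS := subsetP hASS x hx.
    have xT : x \notin T by move: hd; rewrite disjoint_subset => /subsetP /(_ x xS); rewrite inE.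
    rewrite (negbTE xT); apply/esym/negP => hh.
    by have := subsetP hVT x hh; rewrite inE (negbTE xT) andbF.
  case h2: (x \in B2 :|: V); rewrite ?andbF ?andbT //.
  by move: (subsetP hVT x h2); rewrite inE => /andP[].
have hASe : (AS :|: (B2 :|: V)) :&: S = AS.
  apply/setP => x; rewrite !inE.
  case hx: (x \in AS); first by rewrite (subsetP hASS x hx) /=.
  rewrite /=; apply/negP => /andP[h xS].
  have := subsetP hVT x (etrans (in_setU _ _ _) h); rewrite inE => /andP[_ xT].
  by move: hd; rewrite disjoint_subset => /subsetP /(_ x xS); rewrite inE xT.
have hA : AS :|: (B2 :|: V) \in FP.2.
  rewrite inE; apply/and3P; split.
  - by apply: setUSS => //; apply: subset_trans hVT (subsetIr _ _).
  - by rewrite hASe.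
  - rewrite hASe hAT /nullity /lambda (rk_indep hAS1).
    have : #|B2| <= rk Q (B2 :|: V) by rewrite -(rk_indep hB1); apply: rk_mono; apply: subsetUl.
    rewrite hB2V => hb; apply: (arith4 hb hV2); rewrite /m; exact: geq_minr.
have hAY : AS :|: (B2 :|: V) \subset Y.
  by rewrite subUset (subset_trans hAS2 (subsetIl _ _)) (subset_trans hVT (subsetIl _ _)).
have := rk_ge hA hAY.
have hc : #|AS :|: (B2 :|: V)| = #|AS| + (#|B2| + #|V|).
  have hsub : AS :|: (B2 :|: V) \subset S :|: T.
    by rewrite subUset (subset_trans hASS (subsetUl _ _)) (subset_trans hVT (subset_trans (subsetIr _ _) (subsetUr _ _))).
  by rewrite (card_split hsub hd) hASe hAT hB2V.
rewrite hc hV2 /m.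
have h1 : #|B2| <= #|Y :&: T| by apply: subset_leq_card.
have h2 : #|AS| <= rkM N1 by apply: rk_ge => //.
rewrite -hAS3 -hB3; exact: arith1.
Qed.

End FP.

Lemma cf_comp M N1 Q Z : is_matroid M -> is_matroid N1 -> set0 \in Q.2 ->
  [disjoint N1.1 & Q.1] -> free_product N1 Q = M -> cyclic_flat M Z ->
  (Z \subset N1.1) || (N1.1 \subset Z).
Proof.
move=> hM hN1 hQ0 hd hfp [[hZE hflat] hcyc].
apply/negPn/negP; rewrite negb_or => /andP[/subsetPn [t tZ tS] /subsetPn [s sS sZ]].
have hE : M.1 = N1.1 :|: Q.1 by rewrite -hfp.
have tE := subsetP hZE t tZ.
have tT : t \in Q.1 by move: tE; rewrite hE inE (negbTE tS).
have sE : s \in M.1 by rewrite hE inE sS.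
have [C [hC tC hCZ]] := hcyc t tZ.
have e1 := circuit_rm hM hC tC hCZ.
have hZST : Z \subset N1.1 :|: Q.1 by rewrite -hE.
have hlb := fp_lb hN1 hQ0 hd hZST.
have hub1 := fp_ub hQ0 hd (Z :\ t).
have hub2 := fp_ub hQ0 hd (s |: Z).
have hsZ : s \in M.1 :\: Z by rewrite inE sZ sE.
have hfl := hflat s hsZ.
rewrite hfp in hlb hub1 hub2.
have m1 : rk N1 ((Z :\ t) :&: N1.1) <= rk N1 (Z :&: N1.1) by apply: rk_mono; apply: setSI; apply: subsetDl.
have m2 : #|Z :&: Q.1| = #|(Z :\ t) :&: Q.1| + 1.
  rewrite (cardsD1 t (Z :&: Q.1)) inE tZ tT addnC; congr (_ + _); apply: eq_card => x.
  by rewrite !inE; case: (x == t); case: (x \in Z); case: (x \in Q.1).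
have m3 : rk Q ((s |: Z) :&: Q.1) <= rk Q (Z :&: Q.1).
  apply: rk_mono; apply/subsetP => x; rewrite !inE => /andP[/orP[/eqP xs|xZ] xT].
    by move: hd; rewrite disjoint_subset => /subsetP /(_ s sS); rewrite inE -xs xT.
  by rewrite xZ xT.
rewrite e1 in hub1.
exact: (arith5 hlb hub1 hub2 hfl m1 m2 m3).
Qed.

Definition pb (P : Prop) : bool := if excluded_middle_informative P then true else false.
Lemma pbP (P : Prop) : reflect P (pb P).
Proof. by rewrite /pb; case: excluded_middle_informative => h; constructor. Qed.

Lemma inD_cf M F : cyclic_flat M F -> inD M F.
Proof. by move=> h Fam _ hF; apply: hF. Qed.

Lemma inD_bigcup M (P : {set {set U}}) : (forall Y, Y \in P -> inD M Y) ->
  inD M (\bigcup_(Y in P) Y).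
Proof.
move=> hP Fam hc hF; have hc' := hc; case: hc' => _ h2 _; apply: h2.
by apply/subsetP => Y hY; apply: hP.
Qed.

Lemma inD_bigcap M (P : {set {set U}}) : (forall Y, Y \in P -> inD M Y) ->
  inD M (M.1 :&: \bigcap_(Y in P) Y).
Proof.
move=> hP Fam hc hF; have hc' := hc; case: hc' => _ _ h3; apply: h3.
by apply/subsetP => Y hY; apply: hP.
Qed.

Lemma inD0 M : inD M set0.
Proof. by have := @inD_bigcup M set0; rewrite big_set0; apply => Y; rewrite inE. Qed.

Lemma inDE M : inD M M.1.
Proof. by have := @inD_bigcap M set0; rewrite big_set0 setIT; apply => Y; rewrite inE. Qed.

Lemma inD_sub M X : inD M X -> X \subset M.1.
Proof.
move=> h; rewrite -powersetE; apply: h.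
  split.
  - by move=> Y; rewrite powersetE.
  - by move=> P hP; rewrite powersetE; apply/bigcupsP => Y /(subsetP hP); rewrite powersetE.
  - by move=> P _; rewrite powersetE subsetIl.
by move=> F [[hF _] _]; rewrite powersetE.
Qed.

Lemma inD_comp M (S : {set U}) Y : S \subset M.1 ->
  (forall Z, cyclic_flat M Z -> (Z \subset S) || (S \subset Z)) ->
  inD M Y -> (Y \subset S) || (S \subset Y).
Proof.
move=> hS hcf hY.
suff : Y \in [set Y : {set U} | (Y \subset M.1) && ((Y \subset S) || (S \subset Y))].
  by rewrite inE => /andP[].
apply: hY; last by move=> F hF; rewrite inE hcf // andbT; case: hF => [[]].
split.
- by move=> X; rewrite inE => /andP[].
- move=> P hP; rewrite inE.
  have hP' : forall X, X \in P -> (X \subset M.1) && ((X \subset S) || (S \subset X)).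
    by move=> X hX; have := subsetP hP X hX; rewrite inE.
  apply/andP; split.
    by apply/bigcupsP => X /hP' /andP[].
  case: (boolP [exists X in P, S \subset X]).
    move=> /exists_inP [X hX hSX]; apply/orP; right.
    exact: subset_trans hSX (bigcup_sup X hX).
  move=> hne; apply/orP; left; apply/bigcupsP => X hX.
  have := hP' X hX; case/andP => _ /orP[//|hSX].
  by move: hne; rewrite negb_exists_in => /forall_inP /(_ X hX); rewrite hSX.
- move=> P hP; rewrite inE subsetIl /=.
  have hP' : forall X, X \in P -> (X \subset M.1) && ((X \subset S) || (S \subset X)).
    by move=> X hX; have := subsetP hP X hX; rewrite inE.
  case: (boolP [exists X in P, X \subset S]).
    move=> /exists_inP [X hX hXS]; apply/orP; left.
    apply: subset_trans (subsetIr _ _) _; exact: subset_trans (bigcap_inf X hX) hXS.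
  move=> hne; apply/orP; right; rewrite subsetI hS /=; apply/bigcapsP => X hX.
  have := hP' X hX; case/andP => _ /orP[hXS|//].
  by move: hne; rewrite negb_exists_in => /forall_inP /(_ X hX); rewrite hXS.
Qed.

End Gen.

Unset Implicit Arguments.

Theorem theorem6p11 (U : finType) (M : mat U) :
  is_matroid M -> ~ uniform M ->
  (irreducible M <-> ~ (exists X : {set U}, nontrivial_pinchpoint M X)).
Proof.
move=> hM hnu; split.
- move=> [hne hirr] [X [hXD hcomp [Y hYD hYX] [Y' hY'D hXY']]].
  have hXE := inD_sub hXD.
  have hcf : forall Z, cyclic_flat M Z -> (Z \subset X) || (X \subset Z).
    by move=> Z hZ; have := hcomp Z (inD_cf hZ); rewrite orbC.
  have hr := restr_matroid hM X.
  have hc := contr_matroid hM X.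
  have e1 : free_product (contr M X) (empty_mat U) = contr M X.
    by apply: fp_empty_ground => // A; case: hc => h _ _ _; apply: h.
  have hmat : forall N, N \in [:: restr M X; contr M X] -> is_matroid N.
    by move=> N; rewrite !inE => /orP[/eqP->|/eqP->].
  have hdisj : disjoint_grounds [:: restr M X; contr M X].
    rewrite /=; split; last split => //.
      by rewrite disjoint_subset; apply/subsetP => x xX; rewrite !inE xX.
    by rewrite disjoint_subset; apply/subsetP => x _; rewrite !inE.
  have hprod : free_product_seq [:: restr M X; contr M X] = M.
    change (free_product (restr M X) (free_product (contr M X) (empty_mat U)) = M).
    by rewrite e1; exact: (fp_restr_contr hM hXE hcf).
  have := hirr _ hmat hdisj hprod.
  rewrite !inE => /orP[/eqP hE|/eqP hE].
    have hE1 : M.1 = X by rewrite {1}hE.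
    move: hXY'; rewrite properE => /andP[_ /negP]; apply.
    by rewrite -hE1 (inD_sub hY'D).
  have hE1 : M.1 = M.1 :\: X by rewrite {1}hE.
  move: hYX; rewrite properE => /andP[_ /negP]; apply.
  apply/subsetP => x xX; have := subsetP hXE x xX.
  by rewrite hE1 inE xX.
- move=> hnp.
  have hne : M.1 != set0.
    apply/negP => /eqP hE0; apply: hnu; exists 0; apply/setP => A; rewrite inE.
    apply/idP/idP => [hA|/andP[hAE _]].
      have := m_sub hM hA; rewrite hE0 subset0 => /eqP ->.
      by rewrite eqxx cards0.
    by move: hAE; rewrite hE0 subset0 => /eqP ->; exact: m_0 hM.
  split => // s hs hds hfs.
  case hin: (M \in s) => //; exfalso.
  have g1 : (free_product_seq s).1 != set0 by rewrite hfs.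
  have g2 : free_product_seq s \notin s by rewrite hfs hin.
  have [N1 [Q [hN1 /andP[hS hT] hd hQ0 hfp]]] := reduce hs hds g1 g2.
  rewrite hfs in hfp.
  have [Z [hZ hZ0 hZE]] := nonunif_cf hM hnu.
  have hSE : N1.1 \subset M.1 by rewrite -hfp subsetUl.
  have hcf : forall Z', cyclic_flat M Z' -> (Z' \subset N1.1) || (N1.1 \subset Z').
    by move=> Z' hZ'; exact: cf_comp hM hN1 hQ0 hd hfp hZ'.
  have hDc : forall Y, inD M Y -> (Y \subset N1.1) || (N1.1 \subset Y).
    by move=> Y hY; exact: inD_comp hSE hcf hY.
  have [t tT] := set0Pn _ hT.
  have tE : t \in M.1 by rewrite -hfp inE tT orbT.
  have tS : t \notin N1.1.
    by apply/negP => tS; move: hd; rewrite disjoint_subset => /subsetP /(_ t tS); rewrite inE tT.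
  have hZsub : Z \subset M.1 by case: hZ => [[]].
  case/orP: (hcf Z hZ) => [hZS|hSZ].
  + set P1 := [set Y : {set U} | pb (inD M Y) && (Y \subset N1.1)].
    have hP1 : forall Y, Y \in P1 -> inD M Y by move=> Y; rewrite inE => /andP[/pbP h _].
    have hX1D := inD_bigcup hP1.
    have hX1S : \bigcup_(Y in P1) Y \subset N1.1.
      by apply/bigcupsP => Y; rewrite inE => /andP[_ h].
    have hZP : Z \in P1 by rewrite inE hZS andbT; apply/pbP; exact: inD_cf hZ.
    apply: hnp; exists (\bigcup_(Y in P1) Y); split => //.
    * move=> Y hY; case/orP: (hDc Y hY) => h.
        apply/orP; left; apply: bigcup_sup; rewrite inE h andbT; exact/pbP.
      by apply/orP; right; exact: subset_trans hX1S h.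
    * exists set0; first exact: inD0.
      rewrite proper0; apply/set0Pn.
      have [z zZ] := set0Pn _ hZ0; exists z.
      exact: subsetP (bigcup_sup Z hZP) z zZ.
    * exists M.1; first exact: inDE.
      rewrite properE (inD_sub hX1D) /=; apply/negP => h.
      by move: tS; rewrite (subsetP (subset_trans h hX1S) t tE).
  + set P2 := [set Y : {set U} | pb (inD M Y) && (N1.1 \subset Y)].
    have hP2 : forall Y, Y \in P2 -> inD M Y by move=> Y; rewrite inE => /andP[/pbP h _].
    have hX2D := inD_bigcap hP2.
    have hSX2 : N1.1 \subset M.1 :&: \bigcap_(Y in P2) Y.
      by rewrite subsetI hSE /=; apply/bigcapsP => Y; rewrite inE => /andP[_ h].
    have hZP : Z \in P2 by rewrite inE hSZ andbT; apply/pbP; exact: inD_cf hZ.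
    apply: hnp; exists (M.1 :&: \bigcap_(Y in P2) Y); split => //.
    * move=> Y hY; case/orP: (hDc Y hY) => h.
        by apply/orP; left; exact: subset_trans h hSX2.
      apply/orP; right; apply: subset_trans (subsetIr _ _) _.
      apply: bigcap_inf; rewrite inE h andbT; exact/pbP.
    * exists set0; first exact: inD0.
      rewrite proper0; apply/set0Pn.
      have [x xS] := set0Pn _ hS; exists x.
      exact: subsetP hSX2 x xS.
    * exists M.1; first exact: inDE.
      rewrite properE subsetIl /=; apply/negP => h.
      have : M.1 \subset Z.
        apply: subset_trans h _; apply: subset_trans (subsetIr _ _) _.
        exact: bigcap_inf hZP.
      by move=> h2; move: hZE; rewrite eqEsubset hZsub h2.
Qed.
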